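(* (1) Let $f\colon Z\to X$ be a fibration, with basepoints $\dagger\in Z$, $*\in X$. Then the biset of $f$ can be described as \[B(f)=\{\beta\colon[0,1]\to Z\mid\beta(0)=\dagger,\ f(\beta(1))=*\}/{\sim},\] where $\beta\sim\beta'$ if and only if there is a path $\varepsilon\colon[0,1]\to f^{-1}( * )$ from $\beta(1)$ to $\beta'(1)$ such that $\beta\#\varepsilon$ is homotopic (rel endpoints) to $\beta'$. (2) Let $(Z,f,i)$ be a correspondence from $Y$ to $X$ with $f$ fibrant and basepoints $\dagger\in Y$, $*\in X$. Then in the triple description of $B(f,i)$ one may assume that $\gamma$ is constant, and \[B(f,i)=\{(\delta\colon[0,1]\to Y,\ p\in Z)\mid\delta(0)=\dagger,\ \delta(1)=i(p),\ f(p)=*\}/{\sim},\] where $(\delta,p)\sim(\delta',p')$ if and only if there is a path $\varepsilon\colon[0,1]\to f^{-1}( * )$ from $p$ to $p'$ such that $\delta\#i(\varepsilon)$ is homotopic to $\delta'$.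
   Context: For a continuous map $f\colon Z\to X$ and basepoints $\dagger\in Z$, $*\in X$, the biset $B(f)=B(f,\dagger,* )$ is the set of homotopy classes rel endpoints of paths $\gamma$ in $X$ from $f(\dagger)$ to $*$, a $\pi_1(Z,\dagger)$-$\pi_1(X,* )$-biset via $[\lambda]\cdot[\gamma]=[f\circ\lambda\#\gamma]$ and $[\gamma]\cdot[\mu]=[\gamma\#\mu]$. For a correspondence $(Z,f,i)$ from $Y$ to $X$ ($f\colon Z\to X$, $i\colon Z\to Y$), $B(f,i)$ is the set of triples $(\delta,p,\gamma)$ with $p\in Z$, $\delta$ a path in $Y$ from $\dagger$ to $i(p)$, $\gamma$ a path in $X$ from $f(p)$ to $*$, modulo homotopy of triples (with $p$ moving continuously, outer endpoints fixed). A fibration is a map with the homotopy lifting property with respect to all spaces. $\#$ denotes concatenation of paths. *)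

(* Defs.v *)
From HB Require Import structures.
From mathcomp Require Import all_boot all_order all_algebra.
From mathcomp Require Import all_classical all_reals all_analysis.
From mathcomp Require Import Rstruct Rstruct_topology.
From Stdlib Require Import Rdefinitions.

Set Implicit Arguments.
Unset Strict Implicit.
Unset Printing Implicit Defensive.

Import Order.TTheory GRing.Theory Num.Theory.
Local Open Scope classical_set_scope.
Local Open Scope ring_scope.

Definition I01 : set R := `[0%R, 1%R].

(* Paths are functions R -> X whose restriction to [0,1] is continuous
   (values outside [0,1] are irrelevant). *)
Definition is_path {X : topologicalType} (g : R -> X) : Prop :=
  {within I01, continuous g}.

Definition path_from_to {X : topologicalType} (g : R -> X) (x y : X) : Prop :=
  is_path g /\ g 0 = x /\ g 1 = y.

Definition concat {X : topologicalType} (g h : R -> X) : R -> X :=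
  fun t => if t <= 1 / 2 then g (2 * t) else h (2 * t - 1).

(* Homotopy rel endpoints: H(s,t), s the homotopy parameter, t the path
   parameter; H(0,.) = g, H(1,.) = h, endpoints fixed. *)
Definition homotopic_rel {X : topologicalType} (g h : R -> X) : Prop :=
  exists H : R * R -> X,
    {within I01 `*` I01, continuous H} /\
    (forall t, I01 t -> H (0, t) = g t /\ H (1, t) = h t) /\
    (forall s, I01 s -> H (s, 0) = g 0 /\ H (s, 1) = g 1).

Definition fibration {Z X : topologicalType} (f : Z -> X) : Prop :=
  forall (W : topologicalType) (h : W -> Z) (H : W * R -> X),
    continuous h ->
    {within [set: W] `*` I01, continuous H} ->
    (forall w, H (w, 0) = f (h w)) ->
    exists Ht : W * R -> Z,
      {within [set: W] `*` I01, continuous Ht} /\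
      (forall w, Ht (w, 0) = h w) /\
      (forall w t, I01 t -> f (Ht (w, t)) = H (w, t)).

Definition fibre_path {Z X : topologicalType} (f : Z -> X) (star : X)
  (e : R -> Z) (p p' : Z) : Prop :=
  path_from_to e p p' /\ (forall t, I01 t -> f (e t) = star).

Definition beta_ok {Z X : topologicalType} (f : Z -> X) (dag : Z) (star : X)
  (b : R -> Z) : Prop :=
  is_path b /\ b 0 = dag /\ f (b 1) = star.

Definition beta_rel {Z X : topologicalType} (f : Z -> X) (star : X)
  (b b' : R -> Z) : Prop :=
  exists e : R -> Z, fibre_path f star e (b 1) (b' 1) /\
    homotopic_rel (concat b e) b'.

Definition triple_ok {Z X Y : topologicalType} (f : Z -> X) (i : Z -> Y)
  (dag : Y) (star : X) (d : R -> Y) (p : Z) (g : R -> X) : Prop :=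
  path_from_to d dag (i p) /\ path_from_to g (f p) star.

Definition triple_homotopic {Z X Y : topologicalType} (f : Z -> X) (i : Z -> Y)
  (dag : Y) (star : X) (d : R -> Y) (p : Z) (g : R -> X)
  (d' : R -> Y) (p' : Z) (g' : R -> X) : Prop :=
  exists (Hd : R * R -> Y) (P : R -> Z) (Hg : R * R -> X),
    {within I01 `*` I01, continuous Hd} /\ is_path P /\
    {within I01 `*` I01, continuous Hg} /\
    (forall t, I01 t -> Hd (0, t) = d t /\ Hd (1, t) = d' t /\
                        Hg (0, t) = g t /\ Hg (1, t) = g' t) /\
    P 0 = p /\ P 1 = p' /\
    (forall s, I01 s -> Hd (s, 0) = dag /\ Hd (s, 1) = i (P s) /\
                        Hg (s, 0) = f (P s) /\ Hg (s, 1) = star).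

Definition pair_ok {Z X Y : topologicalType} (f : Z -> X) (i : Z -> Y)
  (dag : Y) (star : X) (d : R -> Y) (p : Z) : Prop :=
  path_from_to d dag (i p) /\ f p = star.

Definition pair_rel {Z X Y : topologicalType} (f : Z -> X) (i : Z -> Y)
  (star : X) (d : R -> Y) (p : Z) (d' : R -> Y) (p' : Z) : Prop :=
  exists e : R -> Z, fibre_path f star e p p' /\
    homotopic_rel (concat d (i \o e)) d'.

(* Main.v *)
Require Import Defs.
From mathcomp Require Import all_boot all_order all_algebra.
From mathcomp Require Import all_classical all_reals all_analysis.
From mathcomp Require Import Rstruct Rstruct_topology.
From Stdlib Require Import Rdefinitions.
From mathcomp Require Import lra.
Set Implicit Arguments.
Unset Strict Implicit.
Import Order.TTheory GRing.Theory Num.Theory.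
Local Open Scope classical_set_scope.
Local Open Scope ring_scope.

Lemma comp_within {T U V : topologicalType} (A : set T) (B : set U) (F : U -> V) (phi : T -> U) :
 {within B, continuous F} -> continuous phi -> (forall x, A x -> B (phi x)) ->
 {within A, continuous (F \o phi)}.
Proof.
move=> /subspace_continuousP hF hphi hAB; apply/subspace_continuousP => x Ax.
apply: cvg_comp (hF _ (hAB _ Ax)).
move=> S /= hS.
have h := hphi x _ hS.
change ({near nbhs x, A `<=` phi @^-1` S}).
apply: (@filterS T (nbhs x) _ (fun t => B (phi t) -> S (phi t))); last exact: h.
move=> y hy Ay; exact: hy (hAB _ Ay).
Qed.
Arguments comp_within {T U V A B F phi}.

Definition clamp (x : R) : R := Num.min 1 (Num.max 0 x).
Arguments clamp x%_ring_scope.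
Lemma clamp_cont : continuous clamp.
Proof.
move=> x. have := @continuous_min R R (fun _ => 1) (fun x => Num.max 0 x) x.
apply; first exact: cst_continuous.
have := @continuous_max R R (fun _ => 0) id x; apply; first exact: cst_continuous.
exact: cvg_id.
Qed.
Section C.
Context {T : topologicalType}.
Lemma cpair {U V : topologicalType} (f : T -> U) (g : T -> V) :
  continuous f -> continuous g -> continuous (fun z => (f z, g z)).
Proof. move=> hf hg x; have := @cvg_pair T U V (nbhs x) (nbhs (f x)) (nbhs (g x)) _ _ _ f g; apply; [exact: hf | exact: hg]. Qed.
Lemma cD (f g : T -> R) : continuous f -> continuous g -> continuous (fun z => f z + g z).
Proof. move=> hf hg x; exact: (@continuousD R R^o T f g x (hf x) (hg x)). Qed.
Lemma cB (f g : T -> R) : continuous f -> continuous g -> continuous (fun z => f z - g z).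
Proof. move=> hf hg x; exact: (@continuousB R R^o T f g x (hf x) (hg x)). Qed.
Lemma cM (f g : T -> R) : continuous f -> continuous g -> continuous (fun z => f z * g z).
Proof. move=> hf hg x; exact: (@continuousM R T f g x (hf x) (hg x)). Qed.
Lemma cN (f : T -> R) : continuous f -> continuous (fun z => - f z).
Proof. move=> hf x; exact: (@continuousN R R^o T f x (hf x)). Qed.
Lemma cC {U : topologicalType} (c : U) : continuous (fun _ : T => c).
Proof. exact: cst_continuous. Qed.
Lemma cclamp (f : T -> R) : continuous f -> continuous (fun z => clamp (f z)).
Proof. move=> hf x; apply: continuous_comp; [exact: hf | exact: clamp_cont]. Qed.
End C.
Lemma cfst {U V : topologicalType} : continuous (fun z : U * V => z.1).
Proof. move=> x; exact: cvg_fst. Qed.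
Lemma csnd {U V : topologicalType} : continuous (fun z : U * V => z.2).
Proof. move=> x; exact: cvg_snd. Qed.
Lemma cid {U : topologicalType} : continuous (fun z : U => z).
Proof. move=> x; exact: cvg_id. Qed.
Ltac cont := lazymatch goal with
 | |- continuous (fun z => (@?a z, @?b z)) => apply: (cpair (f := a) (g := b)); [cont|cont]
 | |- continuous (fun z => @?a z + @?b z) => apply: (cD (f := a) (g := b)); [cont|cont]
 | |- continuous (fun z => @?a z * @?b z) => apply: (cM (f := a) (g := b)); [cont|cont]
 | |- continuous (fun z => - @?a z) => apply: (cN (f := a)); cont
 | |- continuous (fun z => clamp (@?a z)) => apply: (cclamp (f := a)); cont
 | |- continuous (fun z => fst z) => exact: cfst
 | |- continuous (fun z => snd z) => exact: csnd
 | |- continuous (fun z => z) => exact: cid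
 | |- continuous (fun _ => _) => exact: cC
 | |- continuous clamp => exact: clamp_cont
 end.

Lemma I01P t : I01 t <-> 0 <= t /\ t <= 1.
Proof. rewrite /I01 /= in_itv /=; split; [by move/andP | by case=> -> ->]. Qed.

Lemma clamp_id x : 0 <= x -> x <= 1 -> clamp x = x.
Proof. move=> h0 h1; rewrite /clamp (max_idPr h0) (min_idPr h1) //. Qed.
Lemma clamp_le0 x : x <= 0 -> clamp x = 0.
Proof. move=> h0; rewrite /clamp (max_idPl h0) (min_idPr _) //. Qed.
Lemma clamp_ge1 x : 1 <= x -> clamp x = 1.
Proof. move=> h1; rewrite /clamp (max_idPr _) ?(min_idPl h1) //; lra. Qed.
Lemma clampP x : (x <= 0 /\ clamp x = 0) \/ ((0 <= x /\ x <= 1) /\ clamp x = x) \/ (1 <= x /\ clamp x = 1).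
Proof.
case: (lerP x 0) => h0; first by left; split=> //; exact: clamp_le0.
case: (lerP x 1) => h1; first by right; left; split; [split; lra | apply: clamp_id; lra].
by right; right; split; [lra | apply: clamp_ge1; lra].
Qed.
Ltac csplit := repeat match goal with |- context[clamp ?x] =>
  lazymatch x with context[clamp _] => fail | _ => idtac end;
  generalize (clampP x); generalize (clamp x); let c := fresh "c" in
  intros c [[? ?]|[[[? ?] ?]|[? ?]]]; subst c end.
Ltac sc := repeat match goal with |- context[clamp ?x] =>
  first [rewrite (@clamp_le0 x); last by lra | rewrite (@clamp_ge1 x); last by lra |
         rewrite (@clamp_id x); [|by lra|by lra]] end.

Lemma mul01 (a b : R) : 0 <= a <= 1 -> 0 <= b <= 1 -> 0 <= a * b <= 1.
Proof. move=> /andP[? ?] /andP[? ?]; apply/andP; split; nra. Qed.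
Lemma cvx01 (s a b : R) : 0 <= s <= 1 -> 0 <= a <= 1 -> 0 <= b <= 1 -> 0 <= (1 - s) * a + s * b <= 1.
Proof. move=> /andP[? ?] /andP[? ?] /andP[? ?]; apply/andP; split; nra. Qed.

Lemma homot_map {Z : topologicalType} (F : R*R -> Z) (L : R*R -> R*R) (g h : R -> Z) :
  {within I01 `*` I01, continuous F} -> continuous L ->
  (forall s t, I01 s -> I01 t -> I01 (L (s,t)).1 /\ I01 (L (s,t)).2) ->
  (forall t, I01 t -> F (L (0,t)) = g t /\ F (L (1,t)) = h t) ->
  (forall s, I01 s -> F (L (s,0)) = g 0 /\ F (L (s,1)) = g 1) ->
  homotopic_rel g h.
Proof.
move=> hF hL hin hgh hend; exists (F \o L); split.
  apply: (comp_within hF hL) => -[s t] [/= hs ht]; exact: hin.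
split => [t ht|s hs] /=; [have [] := hgh t ht | have [] := hend s hs] => -> -> //.
Qed.

Lemma lift_R {Z X : topologicalType} (f : Z -> X) : fibration f ->
 forall (h : R -> Z) (H : R * R -> X), continuous h -> {within [set: R] `*` I01, continuous H} ->
 (forall w, H (w, 0) = f (h w)) ->
 exists L : R * R -> Z, {within [set: R] `*` I01, continuous L} /\ (forall w, L (w, 0) = h w) /\
   (forall w t, I01 t -> f (L (w, t)) = H (w, t)).
Proof. move=> fib; exact: fib. Qed.

Lemma I01_0 : I01 0. Proof. by apply/I01P; split; lra. Qed.
Lemma I01_1 : I01 1. Proof. by apply/I01P; split; lra. Qed.

Lemma path_lift {Z X : topologicalType} (f : Z -> X) : fibration f ->
  forall g p y, path_from_to g (f p) y ->
  exists c, is_path c /\ c 0 = p /\ forall t, I01 t -> f (c t) = g t.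
Proof.
move=> fib g p y [gp [g0 g1]].
have [L [hL [L0 Lf]]] := lift_R fib (h := fun _ => p) (H := fun z => g z.2) (cC (c:=p))
   (comp_within gp csnd (fun z (hz : ([set: R] `*` I01) z) => proj2 hz)) (fun w => g0).
exists (fun t => L (0, t)); split; [|split].
- rewrite /is_path; apply: (comp_within hL (cpair (cC (c:=0:R)) cid)) => t ht; split => //.
- by rewrite L0.
- by move=> t ht; rewrite Lf.
Qed.

Lemma paste_within {T U : topologicalType} (A B : set T) (f g1 g2 : T -> U) :
  closed A -> closed B -> {within A, continuous g1} -> {within B, continuous g2} ->
  (forall x, A x -> f x = g1 x) -> (forall x, B x -> f x = g2 x) ->
  {within A `|` B, continuous f}.
Proof.
move=> cA cB h1 h2 e1 e2; apply: withinU_continuous => //.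
  apply: (subspace_eq_continuous _ h1) => x /set_mem Ax; exact: (esym (e1 x Ax)).
apply: (subspace_eq_continuous _ h2) => x /set_mem Bx; exact: (esym (e2 x Bx)).
Qed.

Lemma closed_seg (a b : R) : closed `[a, b]%classic.
Proof. exact: (@interval_closed R (BLeft a) (BRight b)). Qed.

Lemma closed_prod (A B : set R) : closed A -> closed B -> closed (A `*` B).
Proof.
move=> cA cB.
have -> : A `*` B = (fst @^-1` A) `&` (snd @^-1` B).
  by apply/seteqP; split => -[a b].
apply: closedI.
  by move: cA; apply: (proj1 (continuous_closedP _)); exact: cfst.
by move: cB; apply: (proj1 (continuous_closedP _)); exact: csnd.
Qed.

Lemma segP (a b t : R) : `[a, b]%classic t <-> a <= t /\ t <= b.
Proof. rewrite /= in_itv /=; split; [by move/andP | by case=> -> ->]. Qed.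

Lemma concat_path {X : topologicalType} (g h : R -> X) x y z :
  path_from_to g x y -> path_from_to h y z -> path_from_to (concat g h) x z.
Proof.
move=> [gp [g0 g1]] [hp [h0 h1]]; split; last split.
- rewrite /is_path; have -> : I01 = `[0, 1/2]%classic `|` `[1/2, 1]%classic.
    apply/seteqP; split => t.
      move/I01P=> [? ?]; case: (lerP t (1/2)) => ?; [left|right]; apply/segP; split; lra.
    by case=> /segP [? ?]; apply/I01P; split; lra.
  eapply (@paste_within R X _ _ _ (fun t => g (2 * t)) (fun t => h (2 * t - 1))).
  + exact: closed_seg.
  + exact: closed_seg.
  + apply: (comp_within gp (phi := fun t : R => 2 * t)); first by cont.
    by move=> t /segP [? ?]; apply/I01P; split; lra.
  + apply: (comp_within hp (phi := fun t : R => 2 * t - 1)); first by cont.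
    by move=> t /segP [? ?]; apply/I01P; split; lra.
  + by move=> t /segP [? ?]; rewrite /concat ifT //.
  + move=> t /segP [? ?]; rewrite /concat; case: ifP => // ht.
    have -> : t = 1/2 by lra.
    have -> : 2 * (1/2) - 1 = 0 :> R by lra.
    have -> : 2 * (1/2) = 1 :> R by lra.
    by rewrite g1 h0.
- by rewrite /concat ifT ?mulr0 //; lra.
- rewrite /concat ifF; last by apply/negbTE; rewrite -ltNge; lra.
  have -> : 2 * 1 - 1 = 1 :> R by lra.
  by [].
Qed.

Lemma cont_comp_within {T U V : topologicalType} (A : set T) (F : U -> V) (g : T -> U) :
  continuous F -> {within A, continuous g} -> {within A, continuous (F \o g)}.
Proof. move=> hF hg x; exact: (continuous_comp (hg x) (hF _)). Qed.

Lemma path_comp {U V : topologicalType} (F : U -> V) (g : R -> U) x y :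
  continuous F -> path_from_to g x y -> path_from_to (F \o g) (F x) (F y).
Proof. by move=> hF [gp [g0 g1]]; split; [exact: cont_comp_within | rewrite /= g0 g1]. Qed.

Lemma I01_range (phi : R * R -> R) :
  (forall s t, 0 <= s <= 1 -> 0 <= t <= 1 -> 0 <= phi (s, t) <= 1) ->
  forall z, (I01 `*` I01) z -> I01 (phi z).
Proof.
move=> h [s t] [/I01P [? ?] /I01P [? ?]]; apply/I01P.
have /andP[] : 0 <= phi (s, t) <= 1 by apply: h; apply/andP; split.
by [].
Qed.

Lemma part2a (Z X Y : topologicalType) (f : Z -> X) (i : Z -> Y) (dag : Y) (star : X) :
  continuous f -> continuous i -> fibration f ->
  forall (d : R -> Y) (p : Z) (g : R -> X), triple_ok f i dag star d p g ->
  exists (d' : R -> Y) (p' : Z), pair_ok f i dag star d' p' /\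
    triple_homotopic f i dag star d p g d' p' (fun _ => star).
Proof.
move=> cf ci fib d p g [dpt [gp [g0 g1]]].
have [c [cp [c0 cf']]] := path_lift fib (conj gp (conj g0 g1)).
have hic : path_from_to (i \o c) (i p) (i (c 1)).
  by rewrite -c0; apply: path_comp => //; split.
have [d'p [d'0 d'1]] := concat_path dpt hic.
set d' := concat d (i \o c) in d'p d'0 d'1 *.
exists d', (c 1); split; first by split; [split; [|split] | rewrite cf' ?g1 //; exact: I01_1].
exists (fun z => d' (z.2 * ((1 + z.1)/2))), c, (fun z => g ((1 - z.1) * z.2 + z.1 * 1)).
split; [|split; [|split; [|split; [|split; [|split]]]]].
- apply: (comp_within d'p (phi := fun z : R * R => z.2 * ((1 + z.1)/2))); first by cont.
  apply: I01_range => s t /andP[? ?] /andP[? ?] /=; apply: mul01; apply/andP; split; lra.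
- exact: cp.
- apply: (comp_within gp (phi := fun z : R * R => (1 - z.1) * z.2 + z.1 * 1)); first by cont.
  apply: I01_range => s t hs ht /=; apply: cvx01 => //; rewrite ?ler01 ?lexx //.
- move=> t /I01P [? ?] /=; split; [|split; [|split]].
  + rewrite /d' /concat ifT; last lra. by apply: congr1; lra.
  + by apply: congr1; lra.
  + by apply: congr1; lra.
  + by rewrite (_ : _ * t + _ = 1) //; lra.
- exact: c0.
- by [].
- move=> s /I01P [? ?] /=; split; [|split; [|split]].
  + by rewrite mul0r.
  + rewrite mul1r /d' /concat; case: ifP => hs /=.
      have s0 : s = 0 by lra.
      rewrite s0 c0 (_ : 2 * _ = 1); [by case: dpt => _ [_ ->] | lra].
    by apply: congr1; apply: congr1; lra.
  + by rewrite cf'; [apply: congr1; lra | apply/I01P; split].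
  + by rewrite (_ : _ * 1 + _ = 1) //; lra.
Qed.

Arguments concat {X} g h t%_ring_scope.
Lemma concat0 {X : topologicalType} (g h : R -> X) : concat g h 0 = g 0.
Proof. by rewrite /concat ifT ?mulr0 //; lra. Qed.
Lemma concat1 {X : topologicalType} (g h : R -> X) : concat g h 1 = h 1.
Proof.
rewrite /concat ifF; last by apply/negbTE; rewrite -ltNge; lra.
by rewrite (_ : 2 * 1 - 1 = 1) //; lra.
Qed.
Lemma concatL {X : topologicalType} (g h : R -> X) t : t <= 1/2 -> concat g h t = g (2 * t).
Proof. by move=> ht; rewrite /concat ifT. Qed.
Lemma concatR {X : topologicalType} (g h : R -> X) t : 1/2 < t -> concat g h t = h (2 * t - 1).
Proof. by move=> ht; rewrite /concat ifF //; apply/negbTE; rewrite -ltNge. Qed.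

Lemma clamp01 x : I01 (clamp x).
Proof. apply/I01P; case: (clampP x) => [[? ->]|[[[? ?] ->]|[? ->]]]; split; lra. Qed.
Lemma clamp01' x : 0 <= clamp x <= 1.
Proof. by have /I01P [-> ->] := clamp01 x. Qed.

Lemma part2b_fwd (Z X Y : topologicalType) (f : Z -> X) (i : Z -> Y) (dag : Y) (star : X) :
  continuous f -> continuous i -> fibration f ->
  forall (d : R -> Y) (p : Z) (d' : R -> Y) (p' : Z),
  pair_ok f i dag star d p -> pair_ok f i dag star d' p' ->
  pair_rel f i star d p d' p' ->
  triple_homotopic f i dag star d p (fun _ => star) d' p' (fun _ => star).
Proof.
move=> cf ci fib d p d' p' [[dp [d0 d1]] fp] [[d'p [d'0 d'1]] fp'].
move=> [e [[[ep [e0 e1]] ef] [K [hK [K01 Kbd]]]]].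
have KL t : I01 t -> K (0, t) = concat d (i \o e) t by move=> ht; case: (K01 t ht).
have KR t : I01 t -> K (1, t) = d' t by move=> ht; case: (K01 t ht).
have Kb s : I01 s -> K (s, 0) = dag by move=> hs; case: (Kbd s hs) => -> _; rewrite concat0.
have Kt s : I01 s -> K (s, 1) = i p' by move=> hs; case: (Kbd s hs) => _ ->; rewrite concat1 /= e1.
exists (fun z => K (clamp (2 * z.1 - 1), z.2 * ((1 + clamp (2 * z.1)) / 2))),
  (fun s => e (clamp (2 * s))), (fun _ => star).
split; [|split; [|split; [|split; [|split; [|split]]]]].
- apply: (comp_within hK (phi := fun z : R * R => (clamp (2 * z.1 - 1), z.2 * ((1 + clamp (2 * z.1)) / 2)))); first by cont.
  move=> [s t] [/I01P [? ?] /I01P [? ?]]; split; first exact: clamp01.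
  apply/I01P/andP; apply: mul01; first by apply/andP; split.
  by have /andP[? ?] := clamp01' (2 * s); apply/andP; split; lra.
- rewrite /is_path; apply: (comp_within ep (phi := fun s : R => clamp (2 * s))); first by cont.
  by move=> s _; exact: clamp01.
- by apply: continuous_subspaceT; exact: cC.
- move=> t /I01P [? ?] /=; split; [|split; [|split]] => //.
  + sc; rewrite KL; last by apply/I01P; split; lra.
    by rewrite concatL; [apply: congr1; lra | lra].
  + by sc; rewrite (_ : t * _ = t) ?KR //; [apply/I01P; split | lra].
- by rewrite /= (_ : 2 * 0 = 0) ?clamp_le0 ?e0 //; lra.
- by rewrite /= clamp_ge1 ?e1 //; lra.
- move=> s /I01P [? ?] /=; split; [|split; [|split]] => //.
  + by rewrite mul0r Kb //; exact: clamp01.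
  + case: (lerP s (1/2)) => hs.
      sc; rewrite KL; last by apply/I01P; split; lra.
      case: (lerP (1 * ((1 + 2 * s) / 2)) (1/2)) => hs2.
        rewrite concatL //; have s0 : s = 0 by lra.
        rewrite (_ : 2 * (1 * ((1 + 2 * s) / 2)) = 1); last lra.
        by rewrite d1 (_ : 2 * s = 0) ?e0 //; lra.
      by rewrite concatR //= (_ : 2 * (1 * ((1 + 2 * s) / 2)) - 1 = 2 * s) //; lra.
    sc; rewrite (_ : 1 * ((1 + 1) / 2) = 1); last lra.
    by rewrite Kt ?e1 //; apply/I01P; split; lra.
  + by rewrite ef //; exact: clamp01.
Qed.

Lemma part1a (Z X : topologicalType) (f : Z -> X) (dag : Z) (star : X) :
  continuous f -> fibration f ->
  forall g : R -> X, path_from_to g (f dag) star ->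
  exists b : R -> Z, beta_ok f dag star b /\ homotopic_rel (f \o b) g.
Proof.
move=> cf fib g gpt; have [gp [g0 g1]] := gpt.
have [c [cp [c0 cf']]] := path_lift fib gpt.
exists c; split; first by split => //; split => //; rewrite cf' ?g1 //; exact: I01_1.
apply: (homot_map (F := fun z => g z.2) (L := fun z => z)).
- exact: (comp_within gp csnd (fun z (hz : (I01 `*` I01) z) => proj2 hz)).
- exact: cid.
- by move=> s t hs ht.
- by move=> t ht /=; rewrite cf'.
- by move=> s hs /=; rewrite !cf' //; [exact: I01_1 | exact: I01_0].
Qed.

Lemma part1b_fwd (Z X : topologicalType) (f : Z -> X) (dag : Z) (star : X) :
  continuous f -> fibration f ->
  forall b b' : R -> Z, beta_ok f dag star b -> beta_ok f dag star b' ->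
  beta_rel f star b b' -> homotopic_rel (f \o b) (f \o b').
Proof.
move=> cf fib b b' [bp [b0 b1]] [b'p [b'0 b'1]].
move=> [e [[[ep [e0 e1]] ef] [K [hK [K01 Kbd]]]]].
have KL t : I01 t -> K (0, t) = concat b e t by move=> ht; case: (K01 t ht).
have KR t : I01 t -> K (1, t) = b' t by move=> ht; case: (K01 t ht).
have Kb s : I01 s -> K (s, 0) = b 0 by move=> hs; case: (Kbd s hs) => -> _; rewrite concat0.
have Kt s : I01 s -> K (s, 1) = e 1 by move=> hs; case: (Kbd s hs) => _ ->; rewrite concat1.
apply: (homot_map (F := f \o K)
   (L := fun z : R * R => (clamp (2 * z.1 - 1), z.2 * ((1 + clamp (2 * z.1)) / 2)))).
- exact: cont_comp_within.
- by cont.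
- move=> s t /I01P [? ?] /I01P [? ?]; split; first exact: clamp01.
  apply/I01P/andP; apply: mul01; first by apply/andP; split.
  by have /andP[? ?] := clamp01' (2 * s); apply/andP; split; lra.
- move=> t /I01P [? ?] /=; split.
  + sc; rewrite KL; last by apply/I01P; split; lra.
    by rewrite concatL; [apply: congr1; apply: congr1; lra | lra].
  + by sc; rewrite (_ : t * ((1 + 1) / 2) = t) ?KR //; [apply/I01P; split | lra].
- move=> s /I01P [? ?] /=; split.
  + by rewrite mul0r Kb //; exact: clamp01.
  + case: (lerP s (1/2)) => hs.
      sc; rewrite KL; last by apply/I01P; split; lra.
      case: (lerP (1 * ((1 + 2 * s) / 2)) (1/2)) => hs2.
        rewrite concatL //.
        by rewrite (_ : 2 * (1 * ((1 + 2 * s) / 2)) = 1); last lra.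
      by rewrite concatR // ef ?b1 //; apply/I01P; split; lra.
    sc; rewrite (_ : 1 * ((1 + 1) / 2) = 1); last lra.
    by rewrite Kt ?ef ?b1 //; [exact: I01_1 | apply/I01P; split; lra].
Qed.

Lemma pairE {T : Type} (F : R * R -> T) (a b a' b' : R) : a = a' -> b = b' -> F (a, b) = F (a', b').
Proof. by move=> -> ->. Qed.
Lemma lerp0 (u v : R) : (1 - 0) * u + 0 * v = u.
Proof. by rewrite subr0 mul1r mul0r addr0. Qed.
Lemma lerp1 (u v : R) : (1 - 1) * u + 1 * v = v.
Proof. by rewrite subrr mul0r mul1r add0r. Qed.


Bind Scope ring_scope with R.

Lemma part1b_bwd (Z X : topologicalType) (f : Z -> X) (dag : Z) (star : X) :
  continuous f -> fibration f ->
  forall b b' : R -> Z, beta_ok f dag star b -> beta_ok f dag star b' ->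
  homotopic_rel (f \o b) (f \o b') -> beta_rel f star b b'.
Proof.
move=> cf fib b b' [bp [b0 b1]] [b'p [b'0 b'1]] [G [hG [G01 Gbd]]].
have GL t : I01 t -> G (0, t) = f (b t) by move=> ht; case: (G01 t ht).
have GR t : I01 t -> G (1, t) = f (b' t) by move=> ht; case: (G01 t ht).
have Gb s : I01 s -> G (s, 0) = f dag by move=> hs; case: (Gbd s hs) => -> _; rewrite /= b0.
have Gt s : I01 s -> G (s, 1) = star by move=> hs; case: (Gbd s hs) => _ ->.
pose rb := fun t : R => b (1 - t).
have rbp : path_from_to rb (b 1) dag.
  split; last by rewrite /rb subr0 subrr b0.
  rewrite /is_path; apply: (comp_within bp (phi := fun t : R => 1 - t)); first by cont.
  by move=> t /I01P [? ?]; apply/I01P; split; lra.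
have cpt : path_from_to (fun _ : R => dag) dag dag.
  by split => //; apply: continuous_subspaceT; exact: cC.
pose q := concat (concat rb (fun _ : R => dag)) b'.
have [qp [q0 q1]] : path_from_to q (b 1) (b' 1) := concat_path (concat_path rbp cpt) (conj b'p (conj b'0 erefl)).
have qA x : 0 <= x -> x <= 1/4 -> q x = b (1 - 4 * x).
  move=> ? ?; rewrite /q concatL; last lra.
  by rewrite concatL; [rewrite /rb; apply: congr1; lra | lra].
have qB x : 1/4 <= x -> x <= 1/2 -> q x = dag.
  move=> ? ?; rewrite /q concatL //; case: (lerP (2 * x) (1/2)) => hx.
    by rewrite concatL // /rb (_ : 1 - 2 * (2 * x) = 0) //; lra.
  by rewrite concatR.
have qC x : 1/2 < x -> q x = b' (2 * x - 1).
  by move=> ?; rewrite /q concatR.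
pose H := fun z : R * R => G ((1 - z.2) * clamp (4 * clamp z.1 - 1) + z.2 * clamp z.1,
             (1 - z.2) * (clamp (1 - 4 * clamp z.1) + clamp (2 * clamp z.1 - 1)) + z.2 * 1).
have hc : continuous (fun w => q (clamp w)).
  apply/continuous_subspace_setT.
  exact: (comp_within qp clamp_cont (fun x _ => clamp01 x)).
have Hc : {within [set: R] `*` I01, continuous H}.
  apply: (comp_within hG (phi := fun z : R * R =>
     ((1 - z.2) * clamp (4 * clamp z.1 - 1) + z.2 * clamp z.1,
      (1 - z.2) * (clamp (1 - 4 * clamp z.1) + clamp (2 * clamp z.1 - 1)) + z.2 * 1))); first by cont.
  move=> [w s] [_ /I01P [? ?]] /=; split; apply/I01P/andP; apply: cvx01.
  + by apply/andP; split.
  + exact: clamp01'.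
  + exact: clamp01'.
  + by apply/andP; split.
  + have /I01P [? ?] := clamp01 w.
  + by have /I01P [? ?] := clamp01 w; csplit; apply/andP; split; lra.
  + by apply/andP; split; lra.
have Hi : forall w, H (w, 0) = f (q (clamp w)).
  move=> w; rewrite /H /= !lerp0.
  have /I01P [h0 h1] := clamp01 w; move: (clamp w) h0 h1 => x ? ?.
  case: (lerP x (1/4)) => h1.
    rewrite qA //; sc; rewrite (@pairE _ G _ _ 0 (1 - 4 * x)); [|lra|lra].
    by rewrite GL //; apply/I01P; split; lra.
  case: (lerP x (1/2)) => h2.
    rewrite qB; [|lra|lra]; sc; rewrite (@pairE _ G _ _ (4 * x - 1) 0); [|lra|lra].
    by rewrite Gb //; apply/I01P; split; lra.
  rewrite qC //; sc; rewrite (@pairE _ G _ _ 1 (2 * x - 1)); [|lra|lra].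
  by rewrite GR //; apply/I01P; split; lra.
have [L [hL [L0 Lf]]] := lift_R fib hc Hc Hi.
have hL' : {within I01 `*` I01, continuous L}.
  by apply: (continuous_subspaceW _ hL) => -[w s] [_ hs]; split.
pose e := fun u : R => L (clamp (3 * u - 1), clamp (3 * u) - clamp (3 * u - 2)).
have ep : is_path e.
  apply: (comp_within hL (phi := fun u : R => (clamp (3 * u - 1), clamp (3 * u) - clamp (3 * u - 2)))); first by cont.
  move=> u /I01P [? ?]; split => //=; apply/I01P; csplit; split; lra.
have e0 : e 0 = b 1.
  rewrite /e; sc; rewrite (@pairE _ L _ _ 0 0); [|lra|lra].
  by rewrite L0 clamp_le0 ?q0 //; lra.
have e1 : e 1 = b' 1.
  rewrite /e; sc; rewrite (@pairE _ L _ _ 1 0); [|lra|lra].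
  by rewrite L0 clamp_ge1 ?q1 //; lra.
have ef u : I01 u -> f (e u) = star.
  move=> /I01P [? ?]; rewrite /e Lf /H /=; last by apply/I01P; csplit; split; lra.
  case: (lerP u (1/3)) => h1.
    by sc; rewrite (@pairE _ G _ _ 0 1) ?Gt //; [exact: I01_0 | lra | lra].
  case: (lerP u (2/3)) => h2.
    sc; rewrite (@pairE _ G _ _ (3 * u - 1) 1) ?Gt //; [apply/I01P; split; lra | lra | lra].
  sc; rewrite (@pairE _ G _ _ 1 1) ?GR ?b'1 //; [exact: I01_1 | lra | lra].
exists e; split; first by split; [split | exact: ef].
apply: (homot_map (F := L)
  (L := fun z : R * R =>
    ((1 - z.1) * (clamp ((1 - 2 * z.2) / 4) + clamp (6 * z.2 - 4)) + z.1 * ((1 + z.2) / 2),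
     (1 - z.1) * (clamp (6 * z.2 - 3) - clamp (6 * z.2 - 5)) + z.1 * 0))).
- exact: hL'.
- by cont.
- move=> s t /I01P [? ?] /I01P [? ?] /=; split; apply/I01P/andP; apply: cvx01; try (apply/andP; split; lra).
  + by csplit; apply/andP; split; lra.
  + by csplit; apply/andP; split; lra.
- move=> t /I01P [? ?] /=; rewrite !lerp0; split.
  + case: (lerP t (1/2)) => ht.
      rewrite concatL //; sc; rewrite (@pairE _ L _ _ ((1 - 2 * t) / 4) 0); [|lra|lra].
      rewrite L0 clamp_id; [|lra|lra]. rewrite qA; [|lra|lra].
      by apply: congr1; lra.
    rewrite concatR // /e.
    apply: pairE.
      by rewrite clamp_le0; [rewrite add0r; apply: congr1; lra | lra].
    by congr (_ - _); apply: congr1; lra.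
  + rewrite (@pairE _ L _ _ ((1 + t) / 2) 0); [|lra|lra].
    rewrite L0 clamp_id; [|lra|lra].
    case: (lerP t 0) => ht.
      have t0 : t = 0 by lra.
      by rewrite qB; [rewrite t0 b'0|lra|lra].
    by rewrite qC; [apply: congr1; lra|lra].
- move=> s /I01P [? ?] /=; rewrite concat0 concat1; split.
  + sc; rewrite (@pairE _ L _ _ ((1 - s) * (1/4) + s * (1/2)) 0); [|lra|lra].
    rewrite L0 clamp_id; [|lra|lra].
    by rewrite qB ?b0 //; lra.
  + by rewrite /e; sc; apply: pairE; lra.
Qed.

Lemma part2b_bwd (Z X Y : topologicalType) (f : Z -> X) (i : Z -> Y) (dag : Y) (star : X) :
  continuous f -> continuous i -> fibration f ->
  forall (d : R -> Y) (p : Z) (d' : R -> Y) (p' : Z),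
  pair_ok f i dag star d p -> pair_ok f i dag star d' p' ->
  triple_homotopic f i dag star d p (fun _ => star) d' p' (fun _ => star) ->
  pair_rel f i star d p d' p'.
Proof.
move=> cf ci fib d p d' p' [[dp [d0 d1]] fp] [[d'p [d'0 d'1]] fp'].
move=> [Hd [P [Hg [hHd [Pp [hHg [H01 [P0 [P1 Hbd]]]]]]]]].
have HdL t : I01 t -> Hd (0, t) = d t by move=> ht; case: (H01 t ht).
have HdR t : I01 t -> Hd (1, t) = d' t by move=> ht; case: (H01 t ht) => _ [].
have HgL t : I01 t -> Hg (0, t) = star by move=> ht; case: (H01 t ht) => _ [_ []].
have HgR t : I01 t -> Hg (1, t) = star by move=> ht; case: (H01 t ht) => _ [_ [_]].
have Hdb s : I01 s -> Hd (s, 0) = dag by move=> hs; case: (Hbd s hs).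
have Hdt s : I01 s -> Hd (s, 1) = i (P s) by move=> hs; case: (Hbd s hs) => _ [].
have Hgb s : I01 s -> Hg (s, 0) = f (P s) by move=> hs; case: (Hbd s hs) => _ [_ []].
have Hgt s : I01 s -> Hg (s, 1) = star by move=> hs; case: (Hbd s hs) => _ [_ [_]].
have hc : continuous (fun w => P (clamp w)).
  apply/continuous_subspace_setT.
  exact: (comp_within Pp clamp_cont (fun x _ => clamp01 x)).
have Hc : {within [set: R] `*` I01, continuous (fun z : R * R => Hg (clamp z.1, z.2))}.
  apply: (comp_within hHg (phi := fun z : R * R => (clamp z.1, z.2))); first by cont.
  by move=> [w t] [_ ht]; split => //=; exact: clamp01.
have Hi : forall w, Hg (clamp w, 0) = f (P (clamp w)) by move=> w; rewrite Hgb //; exact: clamp01.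
have [L [hL [L0 Lf]]] := lift_R fib hc Hc Hi.
have hL' : {within I01 `*` I01, continuous L}.
  by apply: (continuous_subspaceW _ hL) => -[w s] [_ hs]; split.
have Ls s : I01 s -> L (s, 0) = P s by move=> /I01P [? ?]; rewrite L0 clamp_id.
pose e := fun u : R => L (clamp (3 * u - 1), clamp (3 * u) - clamp (3 * u - 2)).
have ep : is_path e.
  apply: (comp_within hL (phi := fun u : R => (clamp (3 * u - 1), clamp (3 * u) - clamp (3 * u - 2)))); first by cont.
  move=> u /I01P [? ?]; split => //=; apply/I01P; csplit; split; lra.
have e0 : e 0 = p.
  rewrite /e; sc; rewrite (@pairE _ L _ _ 0 0); [|lra|lra].
  by rewrite Ls ?P0 //; exact: I01_0.
have e1 : e 1 = p'.
  rewrite /e; sc; rewrite (@pairE _ L _ _ 1 0); [|lra|lra].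
  by rewrite Ls ?P1 //; exact: I01_1.
have ef u : I01 u -> f (e u) = star.
  move=> /I01P [? ?]; rewrite /e Lf; last by apply/I01P; csplit; split; lra.
  rewrite /=.
  case: (lerP u (1/3)) => h1.
    by sc; rewrite (@pairE _ Hg _ _ 0 (3 * u)) ?HgL //; solve [apply/I01P; split; lra | lra].
  case: (lerP u (2/3)) => h2.
    sc; rewrite (@pairE _ Hg _ _ (3 * u - 1) 1) ?Hgt //; solve [apply/I01P; split; lra | lra].
  sc; rewrite (@pairE _ Hg _ _ 1 (3 - 3 * u)) ?HgR //; solve [apply/I01P; split; lra | lra].
pose Phi := fun z : R * R => if z.2 <= 1/2 then Hd (z.1, 2 * z.2) else i (L (z.1, 2 * z.2 - 1)).
have hPhi : {within I01 `*` I01, continuous Phi}.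
  have -> : I01 `*` I01 = (I01 `*` `[0, 1/2]%classic) `|` (I01 `*` `[1/2, 1]%classic).
    apply/seteqP; split => -[s t] /=.
      move=> [hs /I01P [? ?]]; case: (lerP t (1/2)) => ?; [left|right]; split => //; apply/segP; split; lra.
    by case=> [[hs /segP [? ?]] | [hs /segP [? ?]]]; split => //; apply/I01P; split; lra.
  apply: (@paste_within _ _ _ _ Phi (fun z : R * R => Hd (z.1, 2 * z.2)) (fun z : R * R => i (L (z.1, 2 * z.2 - 1)))).
  + by apply: closed_prod; exact: closed_seg.
  + by apply: closed_prod; exact: closed_seg.
  + apply: (comp_within hHd (phi := fun z : R * R => (z.1, 2 * z.2))); first by cont.
    by move=> [s t] /= [hs /segP [? ?]]; split => //=; apply/I01P; split; lra.
  + apply: (cont_comp_within (g := fun z : R * R => L (z.1, 2 * z.2 - 1)) ci).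
    apply: (comp_within hL' (phi := fun z : R * R => (z.1, 2 * z.2 - 1))); first by cont.
    by move=> [s t] /= [hs /segP [? ?]]; split => //=; apply/I01P; split; lra.
  + by move=> [s t] /= [hs /segP [? ?]]; rewrite /Phi /= ifT.
  + move=> [s t] /= [hs /segP [? ?]]; rewrite /Phi /=; case: ifP => // ht.
    have -> : t = 1/2 by lra.
    rewrite (_ : 2 * (1/2) - 1 = 0); last lra.
    by rewrite (_ : 2 * (1/2) = 1) ?Hdt ?Ls //; lra.
exists e; split; first by split; [split | exact: ef].
apply: (homot_map (F := Phi)
  (L := fun z : R * R =>
    ((1 - z.1) * clamp (6 * z.2 - 4) + z.1 * 1,
     (1 - z.1) * (clamp (2 * z.2) / 2 + (clamp (6 * z.2 - 3) - clamp (6 * z.2 - 5)) / 2) + z.1 * (z.2 / 2)))).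
- exact: hPhi.
- by cont.
- move=> s t /I01P [? ?] /I01P [? ?] /=; split; apply/I01P/andP; apply: cvx01; try (apply/andP; split; lra).
  + by csplit; apply/andP; split; lra.
  + by csplit; apply/andP; split; lra.
- move=> t /I01P [? ?] /=; rewrite !lerp0; split.
  + case: (lerP t (1/2)) => ht.
      rewrite concatL //; sc; rewrite (@pairE _ Phi _ _ 0 t); [|lra|lra].
      by rewrite /Phi /= ifT // HdL //; apply/I01P; split; lra.
    rewrite concatR // /= /e /Phi /=.
    case: (lerP t (2/3)) => h2.
      sc; rewrite ifF; last by apply/negbTE; rewrite -ltNge; lra.
      by apply: congr1; apply: pairE; lra.
    case: (lerP t (5/6)) => h3.
      sc; rewrite ifF; last by apply/negbTE; rewrite -ltNge; lra.
      by apply: congr1; apply: pairE; lra.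
    sc; case: ifP => hy.
      have t1 : t = 1 by lra.
      rewrite (@pairE _ Hd _ _ 1 1); [|lra|lra].
      rewrite (@pairE _ L _ _ 1 0); [|lra|lra].
      by rewrite Hdt ?Ls //; exact: I01_1.
    by apply: congr1; apply: pairE; lra.
  + rewrite !lerp1 /Phi /= ifT; last lra.
    by rewrite (_ : 2 * (t / 2) = t) ?HdR //; [apply/I01P; split | lra].
- move=> s /I01P [? ?] /=; rewrite concat0 concat1; split.
  + sc; rewrite (@pairE _ Phi _ _ s 0); [|lra|lra].
    by rewrite /Phi /= ifT; [rewrite mulr0 Hdb ?d0 //; apply/I01P; split | lra].
  + sc; rewrite (@pairE _ Phi _ _ 1 (1/2)); [|lra|lra].
    rewrite /Phi /= ifT; last lra.
    rewrite (_ : 2 * (1/2) = 1); last lra.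
    by rewrite Hdt /= ?e1 ?P1 //; exact: I01_1.
Qed.

Theorem mainTheorem15 :
  (* (1) B(f) for a fibration f : Z -> X: the map [beta] |-> [f o beta] is a
     bijection from the proposed quotient onto B(f). *)
  (forall (Z X : topologicalType) (f : Z -> X) (dag : Z) (star : X),
     continuous f -> fibration f ->
     (forall g : R -> X, path_from_to g (f dag) star ->
        exists b : R -> Z, beta_ok f dag star b /\ homotopic_rel (f \o b) g) /\
     (forall b b' : R -> Z, beta_ok f dag star b -> beta_ok f dag star b' ->
        (beta_rel f star b b' <-> homotopic_rel (f \o b) (f \o b')))) /\
  (* (2) B(f,i) for a correspondence (Z,f,i) from Y to X with f fibrant:
     gamma may be taken constant, and (delta,p) |-> [(delta,p,const)] is a
     bijection from the proposed quotient onto B(f,i). *)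
  (forall (Z X Y : topologicalType) (f : Z -> X) (i : Z -> Y)
          (dag : Y) (star : X),
     continuous f -> continuous i -> fibration f ->
     (forall (d : R -> Y) (p : Z) (g : R -> X), triple_ok f i dag star d p g ->
        exists (d' : R -> Y) (p' : Z), pair_ok f i dag star d' p' /\
          triple_homotopic f i dag star d p g d' p' (fun _ => star)) /\
     (forall (d : R -> Y) (p : Z) (d' : R -> Y) (p' : Z),
        pair_ok f i dag star d p -> pair_ok f i dag star d' p' ->
        (pair_rel f i star d p d' p' <->
         triple_homotopic f i dag star d p (fun _ => star) d' p' (fun _ => star)))).
Proof.
split.
- move=> Z X f dag star cf fib; split.
  + exact: (part1a cf fib).
  + move=> b b' hb hb'; split; [exact: (part1b_fwd cf fib hb hb') | exact: (part1b_bwd cf fib hb hb')].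
- move=> Z X Y f i dag star cf ci fib; split.
  + exact: (part2a cf ci fib).
  + move=> d p d' p' h h'; split; [exact: (part2b_fwd cf ci fib h h') | exact: (part2b_bwd cf ci fib h h')].
Qed.
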